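(* For any finite simple graph $G$, the quotient of the separated deleted join $\widetilde Z(G)$ of the flag complex $\overline G$ by its free involution $\iota$ equals $Z(G)$. Consequently $\widetilde Z(G)$ is a double cover of $Z(G)$.
   Context: $\overline G$ is the flag (clique) complex of $G$. $\widetilde Z(G)$ is the simplicial complex on $V(G) \times \{-1,+1\}$ whose faces are $(\sigma \times \{-1\}) \cup (\rho \times \{+1\})$ for (possibly empty) cliques $\sigma,\rho$ of $G$ that are disjoint and have no edge of $G$ between them; $\iota$ swaps $(v,-1)$ and $(v,+1)$, and the quotient is the simplicial complex on $V(G)$ whose faces are the images of faces of $\widetilde Z(G)$. $Z(G)$ is the simplicial complex on $V(G)$ with complete 1-skeleton, in which a triangle is a face if and only if an odd number of its edges lie in $G$, and a simplex of dimension at least $2$ is a face if and only if all its triangles are faces. *)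

(* Defs.v *)
From mathcomp Require Import all_boot.
Set Implicit Arguments. Unset Strict Implicit. Unset Printing Implicit Defensive.

(* A finite simple graph: vertex type T : finType, adjacency e : rel T,
   assumed symmetric and irreflexive (hypotheses of the theorem). *)

Section Defs.
Variables (T : finType) (e : rel T).

(* cliques of G = faces of the flag complex \overline G (empty allowed) *)
Definition clique (s : {set T}) : bool :=
  [forall x in s, forall y in s, (x != y) ==> e x y].

Definition no_edge_between (s r : {set T}) : bool :=
  [forall x in s, forall y in r, ~~ e x y].

(* vertices of \tilde Z(G): T * bool, with false = -1 and true = +1 *)
Definition tag_set (s : {set T}) (b : bool) : {set T * bool} :=
  setX s [set b].

Definition Ztilde_face (S : {set T * bool}) : Prop :=
  exists (sg rh : {set T}),
    [/\ clique sg, clique rh, [disjoint sg & rh], no_edge_between sg rh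
      & S = tag_set sg false :|: tag_set rh true].

Definition swap_sign (x : T * bool) : T * bool := (x.1, ~~ x.2).
Definition swap_set (S : {set T * bool}) : {set T * bool} := swap_sign @: S.

Definition proj_set (S : {set T * bool}) : {set T} := fst @: S.

Definition quotient_face (t : {set T}) : Prop :=
  exists S, Ztilde_face S /\ t = proj_set S.

Definition is_edge (u : {set T}) : bool :=
  [exists x in u, exists y in u, (x != y) && e x y].

Definition odd_triangle (t : {set T}) : bool :=
  odd #|[set u in powerset t | (#|u| == 2) && is_edge u]|.

(* faces of Z(G): complete 1-skeleton; a triangle is a face iff it has an
   odd number of edges; a higher simplex is a face iff all its triangles are.
   Uniformly: every 3-subset of t is an odd triangle. *)
Definition Z_face (t : {set T}) : bool :=
  [forall u in powerset t, (#|u| == 3) ==> odd_triangle u].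

End Defs.

(* Main.v *)
Require Import Defs.
From mathcomp Require Import all_boot.
Set Implicit Arguments. Unset Strict Implicit. Unset Printing Implicit Defensive.

Section S.
Variables (T : finType) (e : rel T).
Hypotheses (e_sym : symmetric e) (e_irr : irreflexive e).

Lemma is_edge2 x y : x != y -> is_edge e [set x; y] = e x y.
Proof.
move=> nxy; apply/idP/idP.
  case/existsP=> x' /andP [Hx' /existsP [y' /andP [Hy' /andP [nxy' Exy]]]].
  move: Hx' Hy' nxy' Exy; rewrite !inE.
  by case/orP=> /eqP-> ; case/orP=> /eqP-> //; rewrite ?eqxx // e_sym.
move=> Exy; apply/existsP; exists x; rewrite !inE eqxx /=.
by apply/existsP; exists y; rewrite !inE eqxx orbT nxy.
Qed.

Lemma card_filter3 (X Y Z : {set T}) (P : pred {set T}) :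
  X != Y -> X != Z -> Y != Z ->
  #|[set u in [set X; Y; Z] | P u]| = P X + P Y + P Z.
Proof.
move=> nXY nXZ nYZ.
have -> : [set u in [set X; Y; Z] | P u] = [set u in filter P [:: X; Y; Z]].
  by apply/setP=> u; rewrite !inE mem_filter !inE orbA andbC.
have uq : uniq [:: X; Y; Z] by rewrite /= !inE negb_or nXY nXZ nYZ.
have -> : #|[set u in filter P [:: X; Y; Z]]| = #|filter P [:: X; Y; Z]|.
  by apply: eq_card => u; rewrite inE.
move/card_uniqP: (filter_uniq P uq)=> ->.
by rewrite /=; case: (P X); case: (P Y); case: (P Z).
Qed.
Lemma odd_tri a b c : a != b -> a != c -> b != c ->
  odd_triangle e [set a; b; c] = odd (e a b + e a c + e b c).
Proof.
move=> nab nac nbc.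
have E : [set u in powerset [set a; b; c] | (#|u| == 2) && is_edge e u] =
         [set u in [set [set a; b]; [set a; c]; [set b; c]] | is_edge e u].
  apply/setP=> u; rewrite !inE; case: (is_edge e u); rewrite ?andbF ?andbT //.
  apply/idP/idP.
    case/andP=> sub /cards2P [x [y [nxy Hu]]]; subst u.
    have Hx := subsetP sub x; have Hy := subsetP sub y.
    rewrite !inE !eqxx ?orbT in Hx Hy.
    move: (Hx isT) (Hy isT) nxy => {Hx Hy sub}.
    by case/orP=> [/orP[]|] /eqP-> ; case/orP=> [/orP[]|] /eqP-> ; rewrite ?eqxx //= => _;
      rewrite ?eqxx ?orbT //= setUC eqxx ?orbT.
  case/orP=> [/orP[]|] /eqP->; rewrite cards2 ?nab ?nac ?nbc andbT;
    apply/subsetP=> z; rewrite !inE; by case/orP=> /eqP->; rewrite eqxx ?orbT.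
have neq (x y z : T) : z != x -> z != y -> [set x; y] != [set x; z] /\ [set x; y] != [set z; y] /\ [set x; y] != [set y; z] .
  move=> nzx nzy; have nz : z \notin [set x; y] by rewrite !inE negb_or nzx nzy.
  split; [|split]; apply/negP=> /eqP H; move: nz; by rewrite H !inE eqxx ?orbT.
have nba : b != a by rewrite eq_sym.
have nca : c != a by rewrite eq_sym.
have ncb : c != b by rewrite eq_sym.
rewrite /odd_triangle E card_filter3 ?is_edge2 //.
- by case: (neq a b c nca ncb).
- by case: (neq a b c nca ncb) => _ [].
- by case: (neq a c b nba nbc) => _ [].
Qed.


Lemma cliqueP (s : {set T}) : clique e s -> forall x y, x \in s -> y \in s -> x != y -> e x y.
Proof. by move=> /forall_inP H x y Hx Hy nxy; move/forall_inP: (H x Hx) => /(_ y Hy) /implyP; apply. Qed.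

Lemma cliqueI (s : {set T}) : (forall x y, x \in s -> y \in s -> x != y -> e x y) -> clique e s.
Proof. by move=> H; apply/forall_inP=> x Hx; apply/forall_inP=> y Hy; apply/implyP; apply: H. Qed.

Lemma noedgeP (s r : {set T}) : no_edge_between e s r -> forall x y, x \in s -> y \in r -> ~~ e x y.
Proof. by move=> /forall_inP H x y Hx Hy; move/forall_inP: (H x Hx) => /(_ y Hy). Qed.

Lemma noedgeI (s r : {set T}) : (forall x y, x \in s -> y \in r -> ~~ e x y) -> no_edge_between e s r.
Proof. by move=> H; apply/forall_inP=> x Hx; apply/forall_inP=> y Hy; apply: H. Qed.

Definition good (sg rh : {set T}) := [/\ clique e sg, clique e rh, [disjoint sg & rh] & no_edge_between e sg rh].

Lemma edge_side (sg rh : {set T}) x y : good sg rh -> x \in sg :|: rh -> y \in sg :|: rh -> x != y ->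
  e x y = ((x \in sg) == (y \in sg)).
Proof.
case=> c1 c2 d ne; rewrite !inE => Hx Hy nxy.
case/orP: Hx => Hx; case/orP: Hy => Hy.
- by rewrite Hx Hy (cliqueP c1).
- by rewrite Hx (disjointFl d Hy); apply/negbTE; apply: noedgeP ne _ _ Hx Hy.
- by rewrite Hy (disjointFl d Hx) e_sym; apply/negbTE; apply: noedgeP ne _ _ Hy Hx.
- by rewrite (disjointFl d Hx) (disjointFl d Hy) (cliqueP c2).
Qed.

Lemma good_sym (sg rh : {set T}) : good sg rh -> good rh sg.
Proof.
case=> c1 c2 d ne; split => //; first by rewrite disjoint_sym.
by apply: noedgeI => x y Hx Hy; rewrite e_sym; apply: noedgeP ne _ _ Hy Hx.
Qed.

Lemma side_det (sg rh sg' rh' : {set T}) v : good sg rh -> good sg' rh' -> sg :|: rh = sg' :|: rh' ->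
  v \in sg -> v \in sg' -> sg = sg' /\ rh = rh'.
Proof.
move=> g g' U Hv Hv'.
have Hsg : forall u, u \in sg :|: rh -> (u \in sg) = (u == v) || e u v.
  move=> u Hu; case: (eqVneq u v) => [->|nuv] //=.
  by rewrite (edge_side g Hu _ nuv) ?Hv ?eqb_id // inE Hv.
have Hsg' : forall u, u \in sg' :|: rh' -> (u \in sg') = (u == v) || e u v.
  move=> u Hu; case: (eqVneq u v) => [->|nuv] //=.
  by rewrite (edge_side g' Hu _ nuv) ?Hv' ?eqb_id // inE Hv'.
have E1 : sg = sg'.
  apply/setP=> u; case Hu: (u \in sg :|: rh).
    by rewrite Hsg // Hsg' // -U.
  have Hu' : u \notin sg' :|: rh' by rewrite -U Hu.
  move/negbT: Hu Hu'; rewrite !inE => /norP[/negbTE -> _] /norP[/negbTE -> _] //.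
split=> //; apply/setP=> u.
case: g => _ _ d _; case: g' => _ _ d' _.
case: (boolP (u \in sg')) => Hs.
  by rewrite (disjointFr d' Hs) (disjointFr d) // E1.
case Hu: (u \in sg :|: rh).
  move: (Hu); rewrite {1}U => Hu'; move: Hu Hu'; rewrite !inE E1 (negbTE Hs) /=.
  by move=> -> ->.
have Hu' : u \notin sg' :|: rh' by rewrite -U Hu.
by move/negbT: Hu Hu'; rewrite !inE => /norP[_ /negbTE ->] /norP[_ /negbTE ->].
Qed.

Lemma mem_face (sg rh : {set T}) v b :
  ((v, b) \in tag_set sg false :|: tag_set rh true) = if b then v \in rh else v \in sg.
Proof. by rewrite /tag_set !inE /=; case: b; rewrite ?andbT ?andbF ?orbF. Qed.

Lemma proj_face (sg rh : {set T}) : proj_set (tag_set sg false :|: tag_set rh true) = sg :|: rh.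
Proof.
apply/setP=> v; apply/imsetP/idP.
  case=> [[w b]] Hin ->; rewrite mem_face in Hin; rewrite inE /=.
  by case: b Hin => ->; rewrite ?orbT.
rewrite inE => /orP[H|H]; [exists (v, false) | exists (v, true)]; by rewrite ?mem_face.
Qed.

Lemma swap_face (sg rh : {set T}) :
  swap_set (tag_set sg false :|: tag_set rh true) = tag_set rh false :|: tag_set sg true.
Proof.
apply/setP=> [[v b]]; rewrite mem_face; apply/imsetP/idP.
  by case=> [[w c]]; rewrite mem_face => H [-> ->]; case: c H.
move=> H; exists (v, ~~ b); rewrite ?mem_face /swap_sign /= ?negbK //; by case: b H.
Qed.

Lemma Zface_tri (t : {set T}) a b c : Z_face e t -> a \in t -> b \in t -> c \in t ->
  a != b -> a != c -> b != c -> odd (e a b + e a c + e b c).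
Proof.
move=> /forall_inP Z Ha Hb Hc nab nac nbc; rewrite -odd_tri //.
have Z' := Z [set a; b; c]; apply: (implyP (Z' _)).
  rewrite inE; apply/subsetP=> z; rewrite !inE => /orP[/orP[]|] /eqP-> //.
apply/eqP; rewrite [a |: _]setUC -setUA cardsU1.
by rewrite cards2 nac !inE negb_or (eq_sym b a) nab nbc.
Qed.

Lemma Zface_of (t : {set T}) : (forall a b c, a \in t -> b \in t -> c \in t ->
  a != b -> a != c -> b != c -> odd (e a b + e a c + e b c)) -> Z_face e t.
Proof.
move=> H; apply/forall_inP => u; rewrite inE => sub; apply/implyP => /eqP c3.
have [a Ha] : exists a, a \in u.
  by apply/set0Pn; apply/negP => /eqP u0; rewrite u0 cards0 in c3.
move: (c3); rewrite (cardsD1 a) Ha => [[]] /eqP /cards2P [b [c [nbc Hbc]]].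
have Hb : b \in u :\ a by rewrite Hbc !inE eqxx.
have Hc : c \in u :\ a by rewrite Hbc !inE eqxx orbT.
rewrite !inE in Hb Hc; case/andP: Hb => nba Hb; case/andP: Hc => nca Hc.
have Eu : u = [set a; b; c].
  by rewrite -(setD1K Ha) Hbc; apply/setP=> z; rewrite !inE orbA.
rewrite Eu odd_tri ?(eq_sym a) //; apply: H; rewrite ?(eq_sym a) //; exact: (subsetP sub).
Qed.

Lemma good_face S : Ztilde_face e S ->
  exists sg rh, good sg rh /\ S = tag_set sg false :|: tag_set rh true.
Proof. by case=> sg [rh [c1 c2 d ne ->]]; exists sg, rh. Qed.

Lemma quot_Z t : quotient_face e t <-> Z_face e t.
Proof.
split.
  case=> S [/good_face [sg [rh [g ->]]] ->]; rewrite proj_face.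
  apply: Zface_of => a b c Ha Hb Hc nab nac nbc.
  rewrite !(edge_side g) //.
  by case: (a \in sg); case: (b \in sg); case: (c \in sg).
move=> Z; case: (set_0Vmem t) => [-> | [v0 Hv0]].
  exists (tag_set set0 false :|: tag_set set0 true); split; last by rewrite proj_face setU0.
  exists set0, set0; split => //.
  - by apply: cliqueI => x y; rewrite inE.
  - by apply: cliqueI => x y; rewrite inE.
  - by rewrite disjoints_subset sub0set.
  - by apply: noedgeI => x y; rewrite inE.
pose sg := [set u in t | (u == v0) || e u v0].
pose rh := t :\: sg.
have Ht := Zface_tri Z.
exists (tag_set sg false :|: tag_set rh true); split; last first.
  rewrite proj_face; apply/setP=> u; rewrite !inE.
  by case: (u \in t); rewrite /= ?andbT ?orbN ?andbF ?orbF.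
exists sg, rh; split.
- apply: cliqueI => x y; rewrite !inE => /andP [Hx Px] /andP [Hy Py] nxy.
  case: (eqVneq x v0) => [ex|nx0].
    by move: Py nxy; rewrite ex eq_sym => /orP[/eqP->|]; rewrite ?eqxx // e_sym.
  rewrite (negbTE nx0) /= in Px.
  case: (eqVneq y v0) => [ey|ny0]; first by rewrite ey.
  rewrite (negbTE ny0) /= in Py.
  by move: (Ht x y v0 Hx Hy Hv0 nxy nx0 ny0); rewrite Px Py; case: (e x y).
- apply: cliqueI => x y; rewrite !inE => /andP [nPx Hx] /andP [nPy Hy] nxy.
  rewrite Hx /= negb_or in nPx; rewrite Hy /= negb_or in nPy.
  case/andP: nPx => nx0 nex; case/andP: nPy => ny0 ney.
  by move: (Ht x y v0 Hx Hy Hv0 nxy nx0 ny0); rewrite (negbTE nex) (negbTE ney); case: (e x y).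
- by rewrite disjoints_subset; apply/subsetP => u; rewrite !inE => /andP [-> ->].
- apply: noedgeI => x y; rewrite !inE => /andP [Hx Px] /andP [nPy Hy].
  rewrite Hy /= negb_or in nPy; case/andP: nPy => ny0 ney.
  case: (eqVneq x v0) => [ex|nx0]; first by rewrite ex e_sym.
  rewrite (negbTE nx0) /= in Px.
  have nxy : x != y by apply/eqP => exy; rewrite exy (negbTE ney) in Px.
  by move: (Ht x y v0 Hx Hy Hv0 nxy nx0 ny0); rewrite Px (negbTE ney); case: (e x y).
- by [].
Qed.

End S.

Theorem theorem3p3 (T : finType) (e : rel T)
    (e_sym : symmetric e) (e_irr : irreflexive e) :
  (* the quotient of \tilde Z(G) by swap_sign equals Z(G) *)
  (forall t : {set T}, quotient_face e t <-> Z_face e t) /\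
  (* double cover: swap_sign is free and preserves faces, the projection is
     injective on each face of \tilde Z(G), and the faces of \tilde Z(G)
     over a nonempty face proj S of Z(G) are exactly S and swap_sign S (distinct) *)
  (forall x : T * bool, swap_sign x != x) /\
  (forall S : {set T * bool}, Ztilde_face e S ->
     [/\ Ztilde_face e (swap_set S),
         {in S &, injective fst} &
         (S != set0 ->
            swap_set S != S /\
            (forall S' : {set T * bool}, Ztilde_face e S' ->
               proj_set S' = proj_set S -> S' = S \/ S' = swap_set S))]).
Proof.
split; first by move=> t; apply: quot_Z.
split; first by case=> v b; rewrite /swap_sign; apply/eqP => -[]; case: b.
move=> S /good_face [sg [rh [g ->]]].
have [c1 c2 d ne] := g.
split.
- rewrite swap_face; exists rh, sg.
  by have [g1 g2 g3 g4] := good_sym e_sym g; split.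
- move=> [v b] [w c]; rewrite !mem_face /= => Hx Hy evw; subst w.
  case: b c Hx Hy => -[] //= Hx Hy.
    by rewrite (disjointFr d Hy) in Hx.
  by rewrite (disjointFr d Hx) in Hy.
move=> /set0Pn [[v b] Hv]; split.
  apply/negP => /eqP E; move: (Hv); rewrite -{1}E swap_face !mem_face in Hv *.
  case: b Hv => /= H1 H2.
    by rewrite (disjointFr d H1) in H2.
  by rewrite (disjointFr d H2) in H1.
move=> S' /good_face [sg' [rh' [g' ->]]]; rewrite !proj_face => U.
rewrite swap_face.
have Hv' : v \in sg' :|: rh' by rewrite U inE; move: Hv; rewrite mem_face; case: b => ->; rewrite ?orbT.
have gs := good_sym e_sym g; have gs' := good_sym e_sym g'.
move: Hv; rewrite mem_face; case: b => Hv; move: Hv'; rewrite inE => /orP [] Hv'.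
- have [-> ->] := side_det e_sym g' gs (etrans U (setUC _ _)) Hv' Hv; by right.
- have [-> ->] := side_det e_sym gs' gs (etrans (setUC _ _) (etrans U (setUC _ _))) Hv' Hv; by left.
- have [-> ->] := side_det e_sym g' g U Hv' Hv; by left.
- have [-> ->] := side_det e_sym gs' g (etrans (setUC _ _) U) Hv' Hv; by right.
Qed.
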